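(* Let $(\mathsf P,\mathcal O)$ be a semitopology and $p\in\mathsf P$. Then: (1) $p$ is regular if and only if $p$ is weakly regular and strongly compatible; (2) every point of $\mathsf P$ is regular if and only if every point of $\mathsf P$ is weakly regular and the semiframe $(\mathcal O,\subseteq,\between)$ is strongly compatible.
   Context: A semitopology is a pair $(\mathsf P,\mathcal O)$ where $\mathcal O\subseteq\mathcal P(\mathsf P)$ contains $\varnothing,\mathsf P$ and is closed under arbitrary unions. Write $O\between O'$ when $O\cap O'\neq\varnothing$. $T$ is topen when nonempty, open, and for all open $O,O'$, $O\between T\between O'$ implies $O\between O'$. Points are intertwined when every open containing one meets every open containing the other; $I(p)$ is the set of points intertwined with $p$; $K(p)$ is the union of all open subsets of $I(p)$. $p$ is regular when $p\in K(p)$ and $K(p)$ is topen; weakly regular when $p\in K(p)$. $\mathrm{nbhd}(p)=\{O\in\mathcal O\mid p\in O\}$. For $F\subseteq\mathcal O$, $F^\ast=\{O'\in\mathcal O\mid O'\between O\text{ for all }O\in F\}$; $F$ is strongly compatible when $F^\ast$ is nonempty and its elements pairwise intersect. A point $p$ is strongly compatible when $\mathrm{nbhd}(p)$ is strongly compatible. An abstract point of $(\mathcal O,\subseteq,\between)$ is a nonempty, up-closed (under $\subseteq$ within $\mathcal O$), pairwise-intersecting set $F\subseteq\mathcal O$ that is completely prime: if $\bigcup\mathcal Y\in F$ for $\mathcal Y\subseteq\mathcal O$ (possibly empty) then some element of $\mathcal Y$ is in $F$. The semiframe $(\mathcal O,\subseteq,\between)$ is strongly compatible when every abstract point of it is strongly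 compatible. *)

(* Defs.v *)
Definition pset (P : Type) := P -> Prop.

Definition subset {P : Type} (A B : pset P) : Prop := forall x, A x -> B x.

Definition between {P : Type} (A B : pset P) : Prop := exists x, A x /\ B x.

Definition bigunion {P : Type} (Y : pset P -> Prop) : pset P :=
  fun x => exists O, Y O /\ O x.

Record semitopology (P : Type) := {
  is_open : pset P -> Prop;
  open_empty : is_open (fun _ => False);
  open_full : is_open (fun _ => True);
  open_union : forall Y : pset P -> Prop,
      (forall O, Y O -> is_open O) -> is_open (bigunion Y)
}.
Arguments is_open {P} s _.

Section Defs.
Context {P : Type} (S : semitopology P).

Definition topen (T : pset P) : Prop :=
  (exists x, T x) /\ is_open S T /\
  forall O O', is_open S O -> is_open S O' ->
    between O T -> between T O' -> between O O'.

Definition intertwined (p q : P) : Prop :=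
  forall O O', is_open S O -> is_open S O' -> O p -> O' q -> between O O'.

Definition I_set (p : P) : pset P := fun q => intertwined p q.

Definition K_set (p : P) : pset P :=
  bigunion (fun O => is_open S O /\ subset O (I_set p)).

Definition regular (p : P) : Prop := K_set p p /\ topen (K_set p).

Definition weakly_regular (p : P) : Prop := K_set p p.

Definition nbhd (p : P) : pset P -> Prop := fun O => is_open S O /\ O p.

Definition star (F : pset P -> Prop) : pset P -> Prop :=
  fun O' => is_open S O' /\ forall O, F O -> between O' O.

Definition strongly_compatible (F : pset P -> Prop) : Prop :=
  (exists O, star F O) /\
  forall O O', star F O -> star F O' -> between O O'.

Definition strongly_compatible_point (p : P) : Prop :=
  strongly_compatible (nbhd p).

Definition abstract_point (F : pset P -> Prop) : Prop :=
  (forall O, F O -> is_open S O) /\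
  (exists O, F O) /\
  (forall O O', F O -> is_open S O' -> subset O O' -> F O') /\
  (forall O O', F O -> F O' -> between O O') /\
  (forall Y : pset P -> Prop, (forall O, Y O -> is_open S O) ->
      F (bigunion Y) -> exists O, Y O /\ F O).

Definition semiframe_strongly_compatible : Prop :=
  forall F, abstract_point F -> strongly_compatible F.

End Defs.

(* Main.v *)
Require Import Defs.

Section H.
Context {P : Type} (S : semitopology P).

Lemma K_open (p : P) : is_open S (K_set S p).
Proof. unfold K_set. apply open_union. intros O [H _]; exact H. Qed.


Lemma meetK_star (p : P) O : is_open S O -> between O (K_set S p) -> star S (nbhd S p) O.
Proof.
  intros HO [x [Ox [W [[HW HWI] Wx]]]]. split; [exact HO|].
  intros U [HU Up]. pose proof (HWI x Wx) as Hi. unfold I_set, intertwined in Hi.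
  destruct (Hi U O HU HO Up Ox) as [y [Uy Oy]]. exists y; split; assumption.
Qed.

Lemma part1 (p : P) : regular S p <-> weakly_regular S p /\ strongly_compatible_point S p.
Proof.
  split.
  - intros [Hp [Hne [Ho Ht]]]. split; [exact Hp|]. split.
    + exists (K_set S p). split; [exact Ho|]. intros O [_ Op]. exists p; split; assumption.
    + intros O O' [HO FO] [HO' FO'].
      apply Ht; try assumption.
      * apply FO. split; assumption.
      * destruct (FO' (K_set S p) (conj Ho Hp)) as [y [a b]]. exists y; split; assumption.
  - intros [Hp [_ Hsc]]. split; [exact Hp|]. split; [exists p; exact Hp|].
    split; [apply K_open|].
    intros O O' HO HO' H1 H2. apply Hsc; apply meetK_star; try assumption.
    destruct H2 as [y [a b]]. exists y; split; assumption.
Qed.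

End H.

Theorem corollary9p51 (P : Type) (S : semitopology P) (p : P) :
  (regular S p <-> weakly_regular S p /\ strongly_compatible_point S p) /\
  ((forall q, regular S q) <->
     (forall q, weakly_regular S q) /\ semiframe_strongly_compatible S).
Proof.
  split; [apply part1|]. split.
  - intros Hr. split; [intro q; apply (Hr q)|].
    intros F [Fo [[O0 FO0] [Fup [Fint Fcp]]]]. split.
    + exists O0. split; [apply Fo; exact FO0|]. intros O FO. apply Fint; assumption.
    + set (Y := fun O => exists q, O = K_set S q).
      assert (HY : forall O, Y O -> is_open S O).
      { intros O [q ->]. apply K_open. }
      assert (FB : F (bigunion Y)).
      { apply (Fup O0); [exact FO0| apply open_union; exact HY|].
        intros x _. exists (K_set S x). split; [exists x; reflexivity| apply (Hr x)]. }
      destruct (Fcp Y HY FB) as [K [[q ->] FK]].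
      intros O O' [HO FO] [HO' FO'].
      destruct (Hr q) as [_ [_ [_ Ht]]]. apply Ht; try assumption.
      * apply FO; exact FK.
      * destruct (FO' _ FK) as [y [a b]]. exists y; split; assumption.
  - intros [Hw Hsf] q. apply part1. split; [apply Hw|].
    apply Hsf. unfold abstract_point, nbhd. split; [intros O [H _]; exact H|].
    split; [exists (fun _ => True); split; [apply open_full| exact I]|].
    split; [intros O O' [_ Op] HO' Hs; split; [exact HO'| apply Hs; exact Op]|].
    split; [intros O O' [_ a] [_ b]; exists q; split; assumption|].
    intros Y HY [_ [O [YO Oq]]]. exists O. split; [exact YO|]. split; [apply HY; exact YO| exact Oq].
Qed.
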